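(* Let $q_1,\ldots,q_t$ be positive integers, $d=\sum_{k=1}^t q_k$, and let $G=K_{q_1,\ldots,q_t}$ be the complete multipartite graph of type $(q_1,\ldots,q_t)$. Then the Ehrhart polynomial of the edge polytope of $G$ is \[ i(\mathcal{P}_G,m)=f(m;d,d)-\sum_{k=1}^t f(m;d,q_k), \] where \[ f(m;d,j)=\sum_{k=1}^{j}p(m;d,k),\qquad p(m;d,j)=\binom{j+m-1}{j-1}\binom{d-j+m-1}{d-j}. \]
   Context: The complete multipartite graph $K_{q_1,\ldots,q_t}$ has vertex set a disjoint union $V_1\cup\cdots\cup V_t$ with $|V_i|=q_i$ and edge set $\{\{u,v\}: u\in V_i, v\in V_j, i\ne j\}$; label its vertices $1,\ldots,d$. For an edge $e=\{i,j\}$ set $\rho(e)=\mathbf{e}_i+\mathbf{e}_j\in\mathbb{R}^d$ ($\mathbf{e}_i$ the unit coordinate vectors). The edge polytope $\mathcal{P}_G$ is the convex hull of $\{\rho(e):e\in E(G)\}$. The Ehrhart polynomial $i(\mathcal{P},m)$ of an integral polytope $\mathcal{P}\subset\mathbb{R}^d$ is the polynomial with $i(\mathcal{P},m)=\#(m\mathcal{P}\cap\mathbb{Z}^d)$ for integers $m\ge0$. Binomial coefficients $\binom{a+m}{a}$ with $a\ge 0$ an integer are regarded as polynomials in $m$, namely $\prod_{i=1}^{a}(m+i)/a!$. *)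

(* Defs.v *)
From HB Require Import structures.
From mathcomp Require Import all_boot all_order all_algebra.
From mathcomp Require Import reals.
Set Implicit Arguments. Unset Strict Implicit. Unset Printing Implicit Defensive.
Import Order.TTheory GRing.Theory Num.Theory.
Local Open Scope ring_scope.

Section EdgePolytope.
Variable R : realType.

Definition rho (d : nat) (i j : 'I_d) : 'rV[R]_d :=
  \row_k ((k == i)%:R + (k == j)%:R).

Definition in_hull (d : nat) (I : finType) (P : pred I) (f : I -> 'rV[R]_d)
    (x : 'rV[R]_d) : Prop :=
  exists lam : I -> R,
    (forall i, 0 <= lam i) /\ (forall i, ~~ P i -> lam i = 0) /\
    \sum_(i | P i) lam i = 1 /\ x = \sum_(i | P i) lam i *: f i.

(* complete multipartite graph on vertices 'I_d, with vertex v in part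
   [part v]; its edges are {u,v} (u < v) with part u != part v *)
Definition cm_edge (d t : nat) (part : 'I_d -> 'I_t) : pred ('I_d * 'I_d) :=
  fun e => (e.1 < e.2)%N && (part e.1 != part e.2).

Definition in_edge_polytope (d t : nat) (part : 'I_d -> 'I_t) (x : 'rV[R]_d) :=
  in_hull (cm_edge part) (fun e => rho e.1 e.2) x.

Definition in_dilate (d t : nat) (part : 'I_d -> 'I_t) (m : nat) (x : 'rV[R]_d) :=
  exists y, in_edge_polytope part y /\ x = m%:R *: y.

(* binomial coefficient binom(a + x, a) as a polynomial in x, evaluated *)
Definition binpoly (a : nat) (x : R) : R :=
  (\prod_(i < a) (x + i.+1%:R)) / (a`!)%:R.

(* p(m;d,j) = binom(j+m-1, j-1) binom(d-j+m-1, d-j) *)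
Definition pmdj (m : R) (d j : nat) : R :=
  binpoly (j - 1) m * binpoly (d - j) (m - 1).

Definition fmdj (m : R) (d j : nat) : R :=
  \sum_(1 <= k < j.+1) pmdj m d k.

End EdgePolytope.

(* Main.v *)
Require Import Defs.
From HB Require Import structures.
From mathcomp Require Import all_boot all_order all_algebra.
From mathcomp Require Import reals.
From mathcomp Require Import zify.
Set Implicit Arguments. Unset Strict Implicit. Unset Printing Implicit Defensive.
Import Order.TTheory GRing.Theory Num.Theory.

Module PartA.

Fixpoint Cn (a n : nat) : nat :=
  match a with 0 => (n == 0 : nat) | a'.+1 => \sum_(i < n.+1) Cn a' i end.

Lemma hockey a n : \sum_(i < n.+1) 'C(i + a, a) = 'C(n + a.+1, a.+1).
Proof.
elim: n => [|n IH]; first by rewrite big_ord1 !binn.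
by rewrite big_ord_recr /= IH -addSnnS binS addSn addnS.
Qed.

Lemma CnS a n : Cn a.+1 n = 'C(n + a, a).
Proof.
elim: a n => [|a IH] n.
  rewrite /= big_ord_recl /= big1 ?addn0 ?bin0 // => i _; by [].
change (\sum_(i < n.+1) Cn a.+1 i = 'C(n + a.+1, a.+1)).
rewrite (eq_bigr (fun i : 'I_n.+1 => 'C(i + a, a))); last by move=> i _; rewrite IH.
by rewrite hockey.
Qed.

Lemma sum_rev (F : nat -> nat) n : \sum_(i < n.+1) F (n - i) = \sum_(i < n.+1) F i.
Proof.
rewrite (reindex_inj rev_ord_inj) /=; apply: eq_bigr => i _.
by rewrite subSS subKn // -ltnS.
Qed.

Definition Hs q b n := \sum_(i < n.+1) Cn q (n.+2 + i) * Cn b (n - i).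

Lemma Hs_rec q b n : Hs q.+1 b n = Hs q b.+1 n + Cn q.+1 n.+1 * Cn b.+1 n.
Proof.
rewrite /Hs.
have E i : Cn q.+1 (n.+2 + i) = Cn q.+1 n.+1 + \sum_(j < i.+1) Cn q (n.+2 + j).
  rewrite /= -addnS big_split_ord /=; congr (_ + _).
rewrite (eq_bigr (fun i : 'I_n.+1 => (Cn q.+1 n.+1 + \sum_(j < i.+1) Cn q (n.+2 + j)) * Cn b (n - i))); last by move=> i _; rewrite E.
rewrite (eq_bigr _ (fun i _ => mulnDl _ _ _)) big_split /= -big_distrr /= sum_rev addnC; congr (_ + _).
transitivity (\sum_(i < n.+1) \sum_(j < n.+1) (if j <= i then Cn q (n.+2 + j) * Cn b (n - i) else 0)).
  apply: eq_bigr => i _; rewrite big_distrl /= (big_ord_widen n.+1 (fun j => Cn q (n.+2 + j) * Cn b (n - i))) //.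
  by rewrite big_mkcond /=; apply: eq_bigr => j _; rewrite ltnS; case: ifP.
rewrite exchange_big /=; apply: eq_bigr => j _ /=.
rewrite big_distrr /= (big_ord_widen n.+1 (fun l => Cn q (n.+2 + j) * Cn b l)); last first.
  by rewrite ltnS leq_subr.
rewrite [RHS]big_mkcond /= -[RHS](sum_rev (fun l => if l < (n - j).+1 then Cn q (n.+2 + j) * Cn b l else 0)).
apply: eq_bigr => i _; rewrite ltnS.
have hi : i <= n by rewrite -ltnS.
have hj : j <= n by rewrite -ltnS.
have -> : (n - i <= n - j) = (j <= i) by apply/idP/idP; lia.
by [].
Qed.

Lemma Hs_sum q D n : q <= D ->
  Hs q (D - q) n = \sum_(1 <= k < q.+1) Cn k n.+1 * Cn (D - k).+1 n.
Proof.
elim: q => [|q IH] hq.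
  rewrite big_geq // /Hs big1 // => i _ /=.
rewrite big_nat_recr //= -IH ?(ltnW hq) //.
have -> : D - q = (D - q.+1).+1 by rewrite subnSK.
by rewrite Hs_rec.
Qed.

Definition Bsum q b m := \sum_(s < (2 * m).+1 | m < s) Cn q s * Cn b (2 * m - s).

Lemma Bsum_Hs q b n : Bsum q b n.+1 = Hs q b n.
Proof.
rewrite /Bsum /Hs -(big_mkord (fun s => n.+1 < s) (fun s => Cn q s * Cn b (2 * n.+1 - s))).
rewrite (big_cat_nat _ (n := n.+2)) //=; last by lia.
rewrite big1_seq ?add0n; last first.
  by move=> i /andP[hi]; rewrite mem_index_iota; lia.
rewrite -{1}(add0n n.+2) big_addn.
have -> : (2 * n.+1).+1 - n.+2 = n.+1 by lia.
rewrite big_mkord big_mkcond /=; apply: eq_bigr => i _.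
rewrite ifT; last by lia.
rewrite addnC; congr (_ * Cn b _); lia.
Qed.

Local Open Scope ring_scope.

Lemma prod_bin a x : (\prod_(i < a) (x + i.+1) = 'C(x + a, a) * a`!)%N.
Proof.
elim: a => [|a IH]; first by rewrite big_ord0 bin0.
rewrite big_ord_recr /= IH factS.
have := mul_bin_diag (x + a.+1) a; rewrite addnS /= => h.
by rewrite mulnA (mulnC _ a.+1) -h; lia.
Qed.

Lemma binpoly_nat (R : realType) a x : binpoly a (x%:R : R) = ('C(x + a, a))%:R.
Proof.
rewrite /binpoly.
have -> : \prod_(i < a) ((x%:R : R) + i.+1%:R) = (\prod_(i < a) (x + i.+1))%:R.
  by rewrite natr_prod; apply: eq_bigr => i _; rewrite natrD.
rewrite prod_bin natrM mulfK //.
by rewrite pnatr_eq0 -lt0n fact_gt0.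
Qed.

Lemma binpoly_m1 (R : realType) a : binpoly a (-1 : R) = (a == 0%N)%:R.
Proof.
case: a => [|a]; first by rewrite /binpoly big_ord0 fact0 divr1.
by rewrite /binpoly big_ord_recl /= addNr mul0r mul0r.
Qed.

Lemma pmdj_nat (R : realType) k D n : (1 <= k)%N -> (k <= D)%N ->
  pmdj (n.+1%:R : R) D k = (Cn k n.+1 * Cn (D - k).+1 n)%:R.
Proof.
case: k => [//|k] _ hk.
rewrite /pmdj binpoly_nat subn1 /= -CnS.
have -> : (n.+1%:R : R) - 1 = n%:R by rewrite mulrSr addrK.
by rewrite binpoly_nat -CnS natrM.
Qed.

Lemma fmdj_nat (R : realType) q D n : (q <= D)%N ->
  fmdj (n.+1%:R : R) D q = (Bsum q (D - q) n.+1)%:R.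
Proof.
move=> hq; rewrite Bsum_Hs Hs_sum // /fmdj natr_sum.
apply: eq_big_nat => k /andP[h1 h2]; rewrite pmdj_nat //.
by apply: leq_trans hq; rewrite -ltnS.
Qed.

Lemma pmdj0 (R : realType) D k : pmdj (0%:R : R) D k = ((D - k)%N == 0%N)%:R.
Proof. by rewrite /pmdj sub0r binpoly_m1 (binpoly_nat R _ 0) add0n binn mul1r. Qed.

Lemma fmdj0_lt (R : realType) D q : (q < D)%N -> fmdj (0%:R : R) D q = 0.
Proof.
move=> hq; rewrite /fmdj big1_seq // => k; rewrite mem_index_iota => /andP[_ hk].
rewrite pmdj0; case: eqP => // h; lia.
Qed.

Lemma fmdj0_eq (R : realType) D : (0 < D)%N -> fmdj (0%:R : R) D D = 1.
Proof.
move=> hD; rewrite /fmdj big_nat_recr //= pmdj0 subnn /= big1_seq ?add0r //.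
move=> k; rewrite mem_index_iota => /andP[_ hk].
rewrite pmdj0; case: eqP => // h; lia.
Qed.

End PartA.
Import PartA.

Module PartB.
Local Open Scope ring_scope.

Section Count.
Variables (D B : nat).

Definition pB : {poly int} := \sum_(j < B) 'X^j.

Lemma coef_pB j : (j < B)%N -> pB`_j = 1.
Proof.
move=> hj; rewrite /pB coef_sum (bigD1 (Ordinal hj)) //= coefXn eqxx big1 ?addr0 //.
by move=> k hk; rewrite coefXn; case: eqP => // h; move: hk; rewrite -val_eqE /= h eqxx.
Qed.

Lemma coef_pow a s : (s < B)%N -> (pB ^+ a)`_s = (Cn a s)%:R.
Proof.
elim: a s => [|a IH] s hs; first by rewrite expr0 coef1.
rewrite exprS coefM.
rewrite (eq_bigr (fun j : 'I_s.+1 => ((Cn a (s - j))%:R : int))); last first.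
  move=> j _; rewrite coef_pB ?mul1r ?IH //.
    by apply: leq_ltn_trans hs; apply: leq_subr.
  by apply: leq_ltn_trans hs; rewrite -ltnS.
by rewrite -natr_sum (sum_rev (fun i => Cn a i)).
Qed.

Definition sA (A : {set 'I_D}) (x : {ffun 'I_D -> 'I_B}) : nat := (\sum_(i in A) (x i : nat))%N.

Lemma sum_bool (T : finType) (P : pred T) : (\sum_x (P x : nat))%N = #|[set x | P x]|.
Proof.
rewrite -sum1_card [RHS]big_mkcond; apply: eq_bigr => x _; rewrite inE; by case: (P x).
Qed.

Lemma count_split A s r : (s < B)%N -> (r < B)%N ->
  #|[set x : {ffun 'I_D -> 'I_B} | (sA A x == s) && (sA (~: A) x == r)]| =
  (Cn #|A| s * Cn #|~: A| r)%N.
Proof.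
move=> hs hr.
pose Z v : {poly {poly int}} := if v \in A then ('X)%:P else 'X.
have key : \prod_(v : 'I_D) \sum_(j : 'I_B) Z v ^+ j =
   \sum_(x : {ffun 'I_D -> 'I_B}) \prod_v Z v ^+ x v := bigA_distr_bigA _.
have EL : \prod_(v : 'I_D) \sum_(j : 'I_B) Z v ^+ j = pB%:P ^+ #|A| * (map_poly polyC pB) ^+ #|~: A|.
  rewrite (bigID (fun v => v \in A)) /=; congr (_ * _).
    rewrite -prodr_const; apply: eq_bigr => v hv.
    by rewrite /Z hv /pB rmorph_sum; apply: eq_bigr => j _; rewrite rmorphXn.
  rewrite -prodr_const; apply: eq_big => [v|v hv]; first by rewrite inE.
  rewrite /Z (negbTE hv) /pB rmorph_sum; apply: eq_bigr => j _.
  by rewrite rmorphXn /= map_polyX.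
have ER : forall x : {ffun 'I_D -> 'I_B}, \prod_v Z v ^+ x v = ('X ^+ sA A x)%:P * 'X ^+ sA (~: A) x.
  move=> x; rewrite (bigID (fun v => v \in A)) /= rmorphXn /sA -!prodrXr; congr (_ * _).
    by apply: eq_bigr => v hv; rewrite /Z hv.
  apply: eq_big => [v|v hv]; first by rewrite inE.
  by rewrite /Z (negbTE hv).
move: (congr1 (fun P : {poly {poly int}} => (P`_r)`_s) key).
rewrite EL -!rmorphXn coefCM coef_map /= coefMC !coef_pow //.
rewrite coef_sum coef_sum.
rewrite (eq_bigr (fun x : {ffun 'I_D -> 'I_B} => (((sA A x == s) && (sA (~: A) x == r) : nat)%:R : int))); last first.
  move=> x _; rewrite ER coefCM coefXn (eq_sym r).
  case: (sA (~: A) x == r); rewrite ?andbT ?andbF ?mulr1 ?mulr0 ?coef0 ?coefXn ?(eq_sym s) //.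
rewrite -natr_sum sum_bool -natrM => /eqP; rewrite eqr_nat => /eqP.
by [].
Qed.

End Count.

End PartB.
Import PartB.

Module PartC.

Lemma sum_gt0_ex (I : finType) (P : pred I) (F : I -> nat) :
  0 < \sum_(i | P i) F i -> exists i, P i && (0 < F i).
Proof.
move=> h; case: (boolP [exists i, P i && (0 < F i)]) => [/existsP//|/existsPn hn].
move: h; rewrite big1 // => i hi; move: (hn i); rewrite hi /=.
by case: (F i).
Qed.

Lemma sum_ind1 (I : finType) (P : pred I) (u : I) :
  \sum_(i | P i) ((i == u) : nat) = P u.
Proof.
case hu: (P u); first by rewrite (bigD1 u) //= eqxx big1 // => i /andP[_ /negbTE ->].
by rewrite big1 // => i hi; case: eqP => // e; move: hi; rewrite e hu.
Qed.

Section Decomp.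
Variables (D t : nat) (part : 'I_D -> 'I_t).

Definition Sp (x : 'I_D -> nat) k := \sum_(i | part i == k) x i.

Lemma sum_parts (x : 'I_D -> nat) : \sum_i x i = \sum_k Sp x k.
Proof. by rewrite (partition_big part predT) //. Qed.

Lemma three_parts (x : 'I_D -> nat) k j l : k != j -> k != l -> j != l ->
  Sp x k + Sp x j + Sp x l <= \sum_i x i.
Proof.
move=> hkj hkl hjl; rewrite sum_parts (bigD1 k) //= (bigD1 j) /=; last by rewrite eq_sym hkj.
rewrite (bigD1 l) /=; last by rewrite eq_sym hkl eq_sym hjl.
lia.
Qed.

Lemma decomp m (x : 'I_D -> nat) : \sum_i x i = (2 * m)%N ->
  (forall k, Sp x k <= m) ->
  exists mu : 'I_D * 'I_D -> nat,
    [/\ forall e, ~~ cm_edge part e -> mu e = 0,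
        \sum_e mu e = m &
        forall i, x i = \sum_e mu e * ((i == e.1) + (i == e.2))].
Proof.
elim: m x => [|m IH] x hs hp.
  exists (fun _ => 0); split => //; first by rewrite big1.
  move=> i; rewrite big1 //; move/eqP: hs; rewrite muln0 sum_nat_eq0 => /forallP h.
  by apply/eqP; move: (h i).
have [i0 _] : exists i, true && (0 < x i) by apply: sum_gt0_ex; lia.
set k := [arg max_(k > part i0) Sp x k].
have kmax : forall l, Sp x l <= Sp x k.
  by rewrite /k; case: arg_maxnP => // k' _ h l; apply: h.
have hsum := sum_parts x.
have [l /andP[hlk hl]] : exists l, (l != k) && (0 < Sp x l).
  apply: sum_gt0_ex.
  move: hsum; rewrite (bigD1 k) //= hs => hsum.
  have := hp k; lia.
set j := [arg max_(j > l | j != k) Sp x j].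
have [hjk jmax] : j != k /\ forall l', l' != k -> Sp x l' <= Sp x j.
  by rewrite /j; case: arg_maxnP => // j' h1 h2; split => // l' hl'; apply: h2.
have hk0 : 0 < Sp x k by apply: leq_trans hl (kmax l).
have hj0 : 0 < Sp x j by apply: leq_trans hl (jmax l hlk).
have [u /andP[/eqP hu xu]] := sum_gt0_ex hk0.
have [v /andP[/eqP hv xv]] := sum_gt0_ex hj0.
have huv : u != v by apply/eqP => e; move: hjk; rewrite -hu -hv e eqxx.
pose x' i := x i - (i == u) - (i == v).
have hx i : x i = x' i + (i == u) + (i == v).
  rewrite /x'; case: (eqVneq i u) => [e|ne]; case: (eqVneq i v) => [e'|ne'] //=.
  - by move: huv; rewrite -e -e' eqxx.
  - by rewrite e; lia.
  - by rewrite e'; lia.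
  - lia.
have hsp P : \sum_(i | P i) x i = \sum_(i | P i) x' i + P u + P v.
  by rewrite (eq_bigr _ (fun i _ => hx i)) !big_split /= !sum_ind1.
have [mu [mu0 musum mux]] : exists mu : 'I_D * 'I_D -> nat,
    [/\ forall e, ~~ cm_edge part e -> mu e = 0,
        \sum_e mu e = m &
        forall i, x' i = \sum_e mu e * ((i == e.1) + (i == e.2))].
  apply: IH.
    by move: (hsp predT); rewrite hs /=; lia.
  move=> l'; move: (hsp (fun i => part i == l')) (hp l'); rewrite /Sp => ->.
  case: (eqVneq l' k) => [->|nk].
    by rewrite hu eqxx /=; lia.
  case: (eqVneq l' j) => [->|nj].
    by rewrite hv eqxx /=; lia.
  rewrite hu hv eq_sym (negbTE nk) eq_sym (negbTE nj) /= !addn0 => h.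
  have e : Sp x l' = \sum_(i | part i == l') x' i.
    by rewrite /Sp hsp hu hv eq_sym (negbTE nk) eq_sym (negbTE nj) /= !addn0.
  have : Sp x j + Sp x k + Sp x l' <= \sum_i x i.
    by apply: three_parts => //; rewrite eq_sym.
  have := kmax l'; have := jmax l' nk.
  move=> h1 h2 h3; rewrite -e; rewrite hs in h3; lia.
pose e0 : 'I_D * 'I_D := if u < v then (u, v) else (v, u).
have he0 : cm_edge part e0.
  rewrite /e0 /cm_edge; case: (ltnP u v) => h /=.
    by rewrite h hu hv eq_sym hjk.
  rewrite hu hv hjk andbT ltn_neqAle h andbT.
  by apply: contra huv => /eqP e; apply/eqP/val_inj.
exists (fun e => mu e + (e == e0)); split.
- move=> e he; rewrite mu0 //; case: eqP => // E; by move: he; rewrite E he0.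
- by rewrite big_split /= musum (sum_ind1 predT) addn1.
- move=> i; rewrite hx mux (eq_bigr _ (fun e _ => mulnDl _ _ _)) big_split /=.
  rewrite -addnA; congr (_ + _).
  rewrite (bigD1 e0) //= eqxx mul1n big1 ?addn0; last first.
    by move=> e /= /negbTE ->.
  rewrite /e0; case: (ltnP u v) => _ /=; lia.
Qed.

End Decomp.

End PartC.
Import PartC.

Module PartE.
Local Open Scope ring_scope.

Section Geo.
Variables (R : realType) (D t : nat) (part : 'I_D -> 'I_t).

Lemma sum_ind1R (I : finType) (P : pred I) (u : I) :
  \sum_(i | P i) ((i == u)%:R : R) = (P u)%:R.
Proof. by rewrite -natr_sum sum_ind1. Qed.

Lemma dilate_nec m (z : 'rV[int]_D) :
  in_dilate part m (map_mx (fun n : int => n%:~R : R) z) ->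
  [/\ forall i, 0 <= z ord0 i, \sum_i z ord0 i = (2 * m)%N%:Z &
      forall k, \sum_(i | part i == k) z ord0 i <= m%:Z].
Proof.
case=> y [[lam [l0 [lnP [lsum ly]]]] hz].
have coord i : (z ord0 i)%:~R =
    m%:R * \sum_(e | cm_edge part e) lam e * ((i == e.1)%:R + (i == e.2)%:R) :> R.
  have := congr1 (fun M : 'rV[R]_D => M ord0 i) hz; rewrite !mxE ly summxE => ->.
  by congr (_ * _); apply: eq_bigr => e _; rewrite !mxE.
split.
- move=> i; rewrite -(ler0z R) coord; apply: mulr_ge0 => //.
  by apply: sumr_ge0 => e _; apply: mulr_ge0 => //; apply: addr_ge0.
- apply/eqP; rewrite -(eqr_int R) rmorph_sum /=.
  rewrite (eq_bigr _ (fun i _ => coord i)) -mulr_sumr exchange_big /=.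
  rewrite (eq_bigr (fun e => lam e * 2)); last first.
    move=> e _; rewrite -mulr_sumr big_split /= !sum_ind1R /=.
    by [].
  have -> : ((2 * m)%N%:~R : R) = (2 * m)%:R by [].
  by rewrite -mulr_suml lsum mul1r natrM mulrC.
- move=> k; rewrite -(ler_int R) rmorph_sum /=.
  have -> : ((m%:Z)%:~R : R) = m%:R by [].
  rewrite (eq_bigr _ (fun i _ => coord i)) -mulr_sumr exchange_big /=.
  rewrite [leRHS](_ : _ = m%:R * \sum_(e | cm_edge part e) lam e); last first.
    by rewrite lsum mulr1.
  apply: ler_wpM2l => //; apply: ler_sum => e he.
  rewrite -mulr_sumr big_split /= !sum_ind1R.
  rewrite -[leRHS]mulr1; apply: ler_wpM2l => //.
  move: he => /andP[_ hp].
  by case: eqP => [e1|]; case: eqP => [e2|] //=; [move: hp; rewrite e1 e2 eqxx| | |];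
    rewrite ?add0r ?addr0.
Qed.

Lemma dilate_suf m (z : 'rV[int]_D) (e0 : 'I_D * 'I_D) :
  cm_edge part e0 ->
  (forall i, 0 <= z ord0 i) -> \sum_i z ord0 i = (2 * m)%N%:Z ->
  (forall k, \sum_(i | part i == k) z ord0 i <= m%:Z) ->
  in_dilate part m (map_mx (fun n : int => n%:~R : R) z).
Proof.
move=> he0 hz0 hzs hzp.
pose x i := `|z ord0 i|%N.
have hxz i : (x i)%:Z = z ord0 i by rewrite /x gez0_abs.
have hxs : (\sum_i x i = 2 * m)%N.
  have : ((\sum_i x i)%N%:Z = \sum_i z ord0 i).
    by rewrite -natz natr_sum; apply: eq_bigr => i _; rewrite natz hxz.
  by rewrite hzs => -[].
have hxp k : (Sp part x k <= m)%N.
  have : ((Sp part x k)%:Z = \sum_(i | part i == k) z ord0 i).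
    by rewrite -natz natr_sum; apply: eq_bigr => i _; rewrite natz hxz.
  by move: (hzp k) => /[swap] <-; rewrite lez_nat.
have [mu [mu0 musum mux]] := decomp hxs hxp.
have zx i : ((z ord0 i)%:~R : R) = (x i)%:R by rewrite -hxz.
case: (posnP m) => [m0|mpos].
  exists (rho R e0.1 e0.2); split.
    exists (fun e => ((e == e0)%:R : R)); do !split.
    - by move=> e; rewrite ler0n.
    - by move=> e; case: eqP => // ->; rewrite he0.
    - by rewrite sum_ind1R he0.
    - by rewrite (bigD1 e0) //= eqxx scale1r big1 ?addr0 // => e /andP[_ /negbTE ->]; rewrite scale0r.
  apply/rowP => i; rewrite !mxE m0 mul0r zx.
  have : (x i <= \sum_i x i)%N by rewrite (bigD1 i) //= leq_addr.
  by rewrite hxs m0 leqn0 => /eqP ->.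
pose lam e : R := (mu e)%:R / m%:R.
have mR : (m%:R : R) != 0 by rewrite pnatr_eq0 -lt0n.
exists (\sum_(e | cm_edge part e) lam e *: rho R e.1 e.2); split.
  exists lam; do !split.
  - by move=> e; rewrite /lam divr_ge0.
  - by move=> e he; rewrite /lam mu0 // mul0r.
  - rewrite /lam -mulr_suml -natr_sum.
    have -> : (\sum_(e | cm_edge part e) mu e)%N = m.
      rewrite -musum [RHS](bigID (fun e => cm_edge part e)) /= [X in (_ + X)%N]big1 ?addn0 //.
    by rewrite divff.
apply/rowP => i; rewrite !mxE zx summxE mux natr_sum mulr_sumr.
rewrite (bigID (fun e => cm_edge part e)) /= [X in _ + X]big1 ?addr0; last first.
  by move=> e /mu0 ->; rewrite mul0n.
apply: eq_bigr => e _; rewrite !mxE /lam mulrA mulrCA divff // mulr1 natrM natrD.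
by [].
Qed.

End Geo.

End PartE.
Import PartE.

Module PartF.

Section Assemble.
Variables (D t : nat) (part : 'I_D -> 'I_t) (m : nat).
Local Notation B := (2 * m).+1.
Local Notation X := {ffun 'I_D -> 'I_B}.
Definition Pk k : {set 'I_D} := [set v | part v == k].

Lemma two_parts (x : X) k l : k != l ->
  sA (Pk k) x + sA (Pk l) x <= sA setT x.
Proof.
move=> hkl.
have E j : sA (Pk j) x = Sp part (fun i => x i : nat) j.
  by rewrite /sA /Sp; apply: eq_bigl => i; rewrite inE.
have ET : sA setT x = \sum_i (x i : nat).
  by rewrite /sA; apply: eq_bigl => i; rewrite inE.
rewrite !E ET (sum_parts part) (bigD1 k) //= (bigD1 l) /=; last by rewrite eq_sym hkl.
lia.
Qed.

Lemma card_good :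
  #|[set x : X | (sA setT x == 2 * m) && [forall k, sA (Pk k) x <= m]]| +
  \sum_k #|[set x : X | (sA setT x == 2 * m) && (m < sA (Pk k) x)]| =
  #|[set x : X | sA setT x == 2 * m]|.
Proof.
rewrite -!sum_bool.
rewrite (eq_bigr (fun k => \sum_(x : X) (((sA setT x == 2 * m) && (m < sA (Pk k) x)) : nat)));
  last by move=> k _; rewrite sum_bool.
rewrite exchange_big /= -big_split /=; apply: eq_bigr => x _.
case: eqP => htot /=; last by rewrite big1.
case: (boolP [exists k, m < sA (Pk k) x]) => [/existsP [k hk]|/existsPn hn].
  have -> : [forall k, sA (Pk k) x <= m] = false.
    by apply/negbTE/forallPn; exists k; rewrite -ltnNge.
  rewrite (bigD1 k) //= hk big1 //= => l hlk.
  have := two_parts x hlk; rewrite htot; lia.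
have -> : [forall k, sA (Pk k) x <= m] by apply/forallP => k; move: (hn k); rewrite -leqNgt.
by rewrite big1 // => k _; move: (hn k) => /negbTE ->.
Qed.

Lemma card_all : #|[set x : X | sA setT x == 2 * m]| = Cn D (2 * m).
Proof.
have -> : [set x : X | sA setT x == 2 * m] =
    [set x : X | (sA setT x == 2 * m) && (sA (~: setT) x == 0)].
  by apply/setP => x; rewrite !inE setCT /sA big_set0 andbT.
by rewrite (@count_split D B setT (2 * m) 0) // setCT cards0 cardsT card_ord muln1.
Qed.

Lemma sA_split A (x : X) : sA setT x = sA A x + sA (~: A) x.
Proof. by rewrite /sA (big_setID A) /= setTI setTD. Qed.

Lemma card_bad k :
  #|[set x : X | (sA setT x == 2 * m) && (m < sA (Pk k) x)]| =
  Bsum #|Pk k| (D - #|Pk k|) m.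
Proof.
have hc : #|~: Pk k| = D - #|Pk k|.
  by have := cardsC (Pk k); rewrite card_ord; lia.
rewrite /Bsum -hc.
rewrite (eq_bigr (fun s : 'I_B => #|[set x : X | (sA (Pk k) x == s) && (sA (~: Pk k) x == 2 * m - s)]|)); last first.
  move=> s _; rewrite count_split //; lia.
rewrite -sum_bool.
rewrite (eq_bigr (fun s : 'I_B => \sum_(x : X) (((sA (Pk k) x == s) && (sA (~: Pk k) x == 2 * m - s)) : nat)));
  last by move=> s _; rewrite sum_bool.
rewrite exchange_big /=; apply: eq_bigr => x _.
rewrite (sA_split (Pk k)).
case: (boolP ((sA (Pk k) x + sA (~: Pk k) x == 2 * m) && (m < sA (Pk k) x))) => [/andP [/eqP h1 h2]|hn].
  have hB : sA (Pk k) x < B by lia.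
  rewrite (bigD1 (Ordinal hB)) //= eqxx /= big1 => [|s /andP [hs hne]].
    by rewrite addn0; case: eqP => //; lia.
  case: eqP => // e; move: hne; rewrite -val_eqE /= e eqxx //.
rewrite big1 // => s hs; case: eqP => //= e1; case: eqP => //= e2.
have hsB := ltn_ord s; move: hn; rewrite e1 e2 subnKC; [by rewrite eqxx hs | lia].
Qed.

End Assemble.

End PartF.
Import PartF.

Module PartG.
Local Open Scope ring_scope.

Lemma Cn_0 a : Cn a 0 = 1%N.
Proof. by case: a => [//|a]; rewrite CnS add0n binn. Qed.

Lemma Bsum_0 q b : Bsum q b 0 = 0%N.
Proof. by rewrite /Bsum big1 // => s; case: s => -[|s] //=. Qed.

Lemma Bsum_D0 D m : (0 < m)%N -> Bsum D 0 m = Cn D (2 * m).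
Proof.
move=> hm; rewrite /Bsum (bigD1 ord_max) /=; last by lia.
rewrite subnn eqxx muln1 big1 ?addn0 // => s /andP[_ hs].
have : (s < 2 * m)%N.
  have := ltn_ord s; move: hs; rewrite -val_eqE /=; lia.
by move=> h; rewrite /=; case: eqP => //; lia.
Qed.

Lemma sumZ (D : nat) (P : pred 'I_D) (f : 'I_D -> nat) :
  \sum_(i | P i) (f i)%:Z = (\sum_(i | P i) f i)%N%:Z.
Proof. by rewrite -natz natr_sum; apply: eq_bigr => i _; rewrite natz. Qed.

Lemma edge_of D t (part : 'I_D -> 'I_t) (u v : 'I_D) : part u != part v ->
  cm_edge part (if (u < v)%N then (u, v) else (v, u)).
Proof.
move=> h; rewrite /cm_edge; case: (ltnP u v) => h' /=; first by rewrite h' h.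
rewrite eq_sym h andbT ltn_neqAle h' andbT.
by apply: contra h => /eqP e; apply/eqP; congr part; apply/val_inj.
Qed.

Lemma main_gen (R : realType) (t : nat) (q : 'I_t -> nat)
    (hq : forall k, (0 < q k)%N) (D : nat) (hD : D = \sum_(k < t) q k)
    (part : 'I_D -> 'I_t)
    (hpart : forall k, #|[set v | part v == k]| = q k)
    (m : nat) :
  exists s : seq 'rV[int]_D,
    [/\ uniq s,
        (forall z : 'rV[int]_D,
           z \in s <-> in_dilate part m (map_mx (fun n : int => n%:~R : R) z))
      & (size s)%:R =
          fmdj (m%:R : R) D D - \sum_(k < t) fmdj (m%:R : R) D (q k)].
Proof.
case: (leqP t 1) => ht.
  have noedge : forall e, ~~ cm_edge part e.
    move=> e; rewrite /cm_edge negb_and negbK; apply/orP; right; apply/eqP/val_inj.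
    change ((part e.1 : nat) = part e.2); have := ltn_ord (part e.1); have := ltn_ord (part e.2); lia.
  exists [::]; split => //.
    move=> z; split => // -[y [[lam [_ [_ [hs _]]]] _]].
    have : \sum_(e | cm_edge part e) lam e = 0.
      by rewrite big_pred0 // => e; apply/negbTE/noedge.
    by rewrite hs => /eqP; rewrite oner_eq0.
  rewrite /= mulr0n; apply/esym/eqP; rewrite subr_eq0; apply/eqP.
  move: ht q hq part hpart hD noedge; case: t => [|[|t]] // _ q hq part hpart hD _.
    by rewrite big_ord0 hD big_ord0 /fmdj big_geq.
  by rewrite big_ord1 hD big_ord1.
pose k0 : 'I_t := Ordinal (ltnW ht).
pose k1 : 'I_t := Ordinal ht.
have exv k : exists u, part u == k.
  have : (0 < #|[set v | part v == k]|)%N by rewrite hpart hq.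
  by rewrite card_gt0 => /set0Pn [u]; rewrite inE => hu; exists u.
have [u hu] := exv k0.
have [v hv] := exv k1.
have he0 := @edge_of _ _ part u v.
have {he0} he0 : cm_edge part (if (u < v)%N then (u, v) else (v, u)).
  by apply: he0; rewrite (eqP hu) (eqP hv) -val_eqE.
have hqlt k : (q k < D)%N.
  pose o := if k == k0 then k1 else k0.
  have ho : o != k.
    rewrite /o; case: (eqVneq k k0) => [->|hne]; first by rewrite -val_eqE.
    by rewrite eq_sym.
  rewrite hD (bigD1 k) //= (bigD1 o) //=.
  by have := hq o; lia.
have hD0 : (0 < D)%N by apply: leq_ltn_trans (hqlt k0).
pose good := [set x : {ffun 'I_D -> 'I_((2 * m).+1)} |
   (sA setT x == 2 * m)%N && [forall k, (sA (Pk part k) x <= m)%N]].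
pose toZ (x : {ffun 'I_D -> 'I_((2 * m).+1)}) : 'rV[int]_D := \row_i ((x i : nat)%:Z).
exists [seq toZ x | x <- enum good]; split.
- rewrite map_inj_uniq ?enum_uniq // => x y h; apply/ffunP => i; apply/val_inj.
  by move: (congr1 (fun M : 'rV[int]_D => M ord0 i) h); rewrite !mxE => -[].
- move=> z; split.
  + case/mapP => x; rewrite mem_enum inE => /andP[/eqP hs /forallP hp] ->.
    apply: (@dilate_suf R D t part m (toZ x) _ he0).
    * by move=> i; rewrite mxE.
    * rewrite (eq_bigr (fun i => ((x i : nat))%:Z)); last by move=> i _; rewrite mxE.
      rewrite sumZ; congr Posz; rewrite -[RHS]hs /sA; by apply: eq_bigl => i; rewrite inE.
    * move=> k; rewrite (eq_bigr (fun i => ((x i : nat))%:Z)); last by move=> i _; rewrite mxE.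
      rewrite sumZ lez_nat.
      have -> : (\sum_(i | part i == k) (x i : nat))%N = sA (Pk part k) x.
        by rewrite /sA; apply: eq_bigl => i; rewrite inE.
      exact: hp k.
  + move=> hin; have [hz0 hzs hzp] := dilate_nec hin.
    have hzle i : (`|z ord0 i| < (2 * m).+1)%N.
      have : z ord0 i <= \sum_j z ord0 j.
        rewrite (bigD1 i) //= lerDl; exact: sumr_ge0.
      by rewrite hzs -(gez0_abs (hz0 i)) lez_nat ltnS.
    pose x : {ffun 'I_D -> 'I_((2 * m).+1)} := [ffun i => inord `|z ord0 i|].
    have hx i : (x i : nat) = `|z ord0 i|%N by rewrite ffunE inordK.
    apply/mapP; exists x.
      rewrite mem_enum inE; apply/andP; split.
        rewrite -eqz_nat /sA -sumZ; apply/eqP; rewrite -hzs.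
        by rewrite [RHS](eq_bigl (fun i => i \in setT)) ?(eq_bigr _ (fun i _ => congr1 Posz (hx i))) => [|i]; rewrite ?inE //; apply: eq_bigr => i _; rewrite gez0_abs.
      apply/forallP => k; rewrite -lez_nat /sA -sumZ.
      rewrite (eq_bigr (fun i => z ord0 i)); last by move=> i _; rewrite hx gez0_abs.
      rewrite (eq_bigl (fun i => part i == k)) ?hzp // => i; by rewrite inE.
    by apply/rowP => i; rewrite mxE hx gez0_abs.
- rewrite size_map -cardE.
  have hc := card_good part m.
  rewrite card_all (eq_bigr (fun k => Bsum (q k) (D - q k) m)) in hc; last first.
    by move=> k _; rewrite card_bad /Pk hpart.
  change (#|good| + \sum_(i < t) Bsum (q i) (D - q i) m = Cn D (2 * m))%N in hc.
  have -> : #|good| = (Cn D (2 * m) - \sum_k Bsum (q k) (D - q k) m)%N by rewrite -hc addnK.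
  rewrite natrB; last by rewrite -hc leq_addl.
  rewrite natr_sum.
  clear hc toZ good; case: m => [|n].
    rewrite Cn_0 big1 ?subr0; last by move=> k _; rewrite Bsum_0.
    rewrite fmdj0_eq // big1 ?subr0 // => k _.
    exact: fmdj0_lt.
  rewrite fmdj_nat // subnn Bsum_D0 //; congr (_ - _).
  apply: eq_bigr => k _; rewrite fmdj_nat //.
  exact: ltnW.
Qed.

End PartG.
Import PartG.

Local Open Scope ring_scope.

Theorem proposition1p3 (R : realType) (t : nat) (q : 'I_t -> nat)
    (hq : forall k, (0 < q k)%N)
    (part : 'I_(\sum_(k < t) q k) -> 'I_t)
    (hpart : forall k, #|[set v | part v == k]| = q k)
    (m : nat) :
  exists s : seq 'rV[int]_(\sum_(k < t) q k),
    [/\ uniq s,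
        (forall z : 'rV[int]_(\sum_(k < t) q k),
           z \in s <-> in_dilate part m (map_mx (fun n : int => n%:~R : R) z))
      & (size s)%:R =
          fmdj (m%:R : R) (\sum_(k < t) q k) (\sum_(k < t) q k)
          - \sum_(k < t) fmdj (m%:R : R) (\sum_(k < t) q k) (q k)].
Proof.
exact: (@main_gen R t q hq _ (erefl _) part hpart m).
Qed.
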